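(* Let $T$ be a tree with $n\geq 3$ vertices and maximum degree $\Delta$, and let $\delta_1$ be the minimum degree among the non-pendant vertices of $T$. Suppose that $m_{1,b}(T)=0$ for all $b\geq 4$ and that $\Delta-\delta_1\leq (2\delta_1-1)^{2}$. Then $GA(T)>ABC(T)$.
   Context: A vertex is pendant if it has degree $1$. $m_{a,b}(T)$ denotes the number of edges of $T$ joining a vertex of degree $a$ to a vertex of degree $b$. With $d_i$ the degree of vertex $v_i$, $GA(T)=\sum_{v_iv_j\in E(T)}\frac{2\sqrt{d_id_j}}{d_i+d_j}$ and $ABC(T)=\sum_{v_iv_j\in E(T)}\sqrt{\frac{d_i+d_j-2}{d_id_j}}$. *)

(* Defs.v *)
From HB Require Import structures.
From mathcomp Require Import all_boot all_order all_algebra.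
From mathcomp Require Import reals.
Set Implicit Arguments. Unset Strict Implicit. Unset Printing Implicit Defensive.
Import Order.TTheory GRing.Theory Num.Theory.

(* A finite simple graph on vertex type V is given by a relation [e]
   that is symmetric and irreflexive. *)

Definition deg (V : finType) (e : rel V) (x : V) : nat := #|[set y | e x y]|.

(* Number of edges: each unordered edge {x,y} gives two ordered pairs. *)
Definition nedges (V : finType) (e : rel V) : nat :=
  #|[set p : V * V | e p.1 p.2]| %/ 2.

Definition is_tree (V : finType) (e : rel V) : Prop :=
  symmetric e /\ irreflexive e /\ (forall x y : V, connect e x y)
  /\ nedges e = #|V| - 1.

Definition maxdeg (V : finType) (e : rel V) : nat := \max_(x : V) deg e x.

(* delta_1: minimum degree among non-pendant vertices (degree > 1).
   (#|V| is only a neutral element; the index set is nonempty for trees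
   with at least 3 vertices.) *)
Definition delta1 (V : finType) (e : rel V) : nat :=
  \big[minn/#|V|]_(x : V | 1 < deg e x) deg e x.

Definition m_ab (V : finType) (e : rel V) (a b : nat) : nat :=
  let c := #|[set p : V * V | [&& e p.1 p.2, deg e p.1 == a & deg e p.2 == b]]| in
  if a == b then c %/ 2 else c.

Local Open Scope ring_scope.

(* Sum over edges of a symmetric function of the endpoint degrees:
   half the sum over ordered adjacent pairs. *)
Definition edge_sum (R : realType) (V : finType) (e : rel V)
  (f : nat -> nat -> R) : R :=
  (\sum_(x : V) \sum_(y : V | e x y) f (deg e x) (deg e y)) / 2.

Definition GA (R : realType) (V : finType) (e : rel V) : R :=
  edge_sum e (fun a b : nat =>
    2 * Num.sqrt ((a * b)%:R) / (a + b)%:R).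

Definition ABC (R : realType) (V : finType) (e : rel V) : R :=
  edge_sum e (fun a b : nat =>
    Num.sqrt (((a + b)%:R - 2) / (a * b)%:R)).

(* Main.v *)
Require Import Defs.
From HB Require Import structures.
From mathcomp Require Import all_boot all_order all_algebra.
From mathcomp Require Import reals zify ring lra.
From Stdlib Require ZArith Lia Psatz.
Import Order.TTheory GRing.Theory Num.Theory.

Module Key.
Import ZArith Lia Psatz.
Lemma keyZ a t : (2<=a -> 0<=t -> t <= (2*a-1)^2 -> (2*a+t)^2*(2*a+t-2) < 4*a^2*(a+t)^2)%Z.
Proof. intros. nia. Qed.

Lemma keyN (a t : nat) : Nat.le 2 a -> Nat.le t (Nat.mul (Nat.sub (Nat.mul 2 a) 1) (Nat.sub (Nat.mul 2 a) 1)) ->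
  Nat.lt (Nat.mul (Nat.sub (Nat.add (Nat.mul 2 a) t) 2) (Nat.mul (Nat.add (Nat.mul 2 a) t) (Nat.add (Nat.mul 2 a) t)))
    (Nat.mul 4 (Nat.mul (Nat.mul a (Nat.add a t)) (Nat.mul a (Nat.add a t)))).
Proof.
intros Ha Ht.
assert (H0 : (Z.of_nat t <= (2*Z.of_nat a-1)^2)%Z) by (rewrite Z.pow_2_r; nia).
pose proof (keyZ (Z.of_nat a) (Z.of_nat t) ltac:(lia) ltac:(lia) H0) as H.
rewrite !Z.pow_2_r in H. nia.
Qed.

End Key.
Import Key.

Definition cond (a b : nat) : bool := ((a+b-2)*((a+b)*(a+b)) < 4*((a*b)*(a*b)))%nat.

Lemma condC a b : cond a b = cond b a.
Proof. by rewrite /cond addnC (mulnC a). Qed.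

Lemma cond_main a b : (2 <= a)%nat -> (a <= b)%nat -> (b - a <= (2*a-1)*(2*a-1))%nat -> cond a b.
Proof.
move=> Ha Hab Ht. rewrite /cond.
have -> : b = a + (b - a) by rewrite subnKC.
set t := b - a.
have E1 : a + (a + t) = 2 * a + t by rewrite addnA mul2n addnn.
rewrite E1. apply/ssrnat.ltP. apply: keyN; [by apply/ssrnat.leP | by apply/ssrnat.leP].
Qed.

Lemma cond_pend b : (1 <= b <= 3)%nat -> cond 1 b.
Proof. by case/andP; case: b => [|[|[|[|b]]]]. Qed.

Local Open Scope ring_scope.

Lemma edge_ineq (R : realType) (a b : nat) : (1 <= a)%nat -> (1 <= b)%nat -> cond a b ->
  Num.sqrt (((a + b)%:R - 2) / (a * b)%:R) < 2 * Num.sqrt ((a * b)%:R) / (a + b)%:R :> R.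
Proof.
move=> Ha Hb C.
have p0 : 0 < (a * b)%:R :> R by rewrite ltr0n muln_gt0 Ha Hb.
have s0 : 0 < (a + b)%:R :> R by rewrite ltr0n addn_gt0 Ha.
have s2 : 2 <= (a + b)%:R :> R by rewrite (ler_nat R 2) -(addn1 1) leq_add.
have u0 : 0 <= ((a + b)%:R - 2) / (a * b)%:R :> R.
  by rewrite divr_ge0 ?subr_ge0 // ltW.
set x := Num.sqrt _. set y := (2 * _ / _).
have hx : 0 <= x by rewrite sqrtr_ge0.
have hy : 0 <= y by apply: divr_ge0; [apply: mulr_ge0 => //; exact: sqrtr_ge0 | exact: ltW].
rewrite -(@ltr_pXn2r _ 2%nat) ?nnegrE //.
rewrite /x /y sqr_sqrtr // expr_div_n exprMn sqr_sqrtr ?ltW //.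
rewrite ltr_pdivrMr // mulrAC ltr_pdivlMr ?exprn_gt0 //.
move: C; rewrite /cond -(ltr_nat R) !natrM natrB; last by rewrite (leq_add Ha Hb).
rewrite !natrD => H.
have -> : (2:R) ^+ 2 = 4%:R by rewrite expr2 -natrM.
rewrite ?natrM ?natrD. nra.
Qed.

Theorem theorem3p8 (R : realType) (V : finType) (e : rel V) :
  is_tree e ->
  (3 <= #|V|)%N ->
  (forall b : nat, (4 <= b)%N -> m_ab e 1 b = 0%N) ->
  (maxdeg e - delta1 e <= (2 * delta1 e - 1) ^ 2)%N ->
  (ABC R e < GA R e)%R.
Proof.
move=> [esym [eirr [econn _]]] n3 Hm Hd.
have nb : forall x : V, exists y, e x y.
  move=> x.
  case: (pickP (predC1 x)) => [y /= yx|H]; last first.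
    have := cardC1 x; rewrite (eq_card0 H) => E. by move: n3 E; case: #|V| => [|[|[|n]]].
  have /connectP [p pth ylast] := econn x y.
  case: p pth ylast => [|z p] /=; first by move=> _ yx'; rewrite yx' eqxx in yx.
  by case/andP=> exz _ _; exists z.
have dpos : forall x, (0 < deg e x)%N.
  move=> x; case: (nb x) => y exy; rewrite /deg; apply/card_gt0P; exists y; by rewrite inE.
have pend : forall x y, e x y -> deg e x = 1%N -> (deg e y <= 3)%N.
  move=> x y exy dx; rewrite leqNgt; apply/negP => b4.
  have H0 := Hm _ b4.
  rewrite /m_ab (negbTE (_ : 1 != deg e y)%N) in H0; last by rewrite neq_ltn (leq_trans _ b4).
  move/eqP: H0; rewrite cards_eq0 => /eqP H0.
  have := in_set0 (x, y); rewrite -H0 inE /= exy dx !eqxx.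
  done.
have dle : forall x, (1 < deg e x)%N -> (delta1 e <= deg e x)%N.
  move=> x hx; rewrite /delta1.
  elim: (index_enum V) (mem_index_enum x) => [//|z s IH].
  rewrite inE big_cons => /predU1P [xz|xs].
  - rewrite -xz hx; exact: geq_minl.
  - case: ifP => _; last exact: IH.
    exact: leq_trans (geq_minr _ _) (IH xs).
have dmax : forall x, (deg e x <= maxdeg e)%N by move=> x; exact: leq_bigmax.
have main : forall x y, e x y -> (deg e x <= deg e y)%N -> cond (deg e x) (deg e y).
  move=> x y exy le_xy.
  case: (ltngtP (deg e x) 1) => [|hx|dx1].
  - by rewrite ltnS leqn0 (gtn_eqF (dpos x)).
  - case: (ltngtP (deg e y) 1) => [|hy|dy1].
    + by rewrite ltnS leqn0 (gtn_eqF (dpos y)).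
    + apply: cond_main => //.
      have h1 := dle x hx. have h2 := dmax y.
      apply: leq_trans (_ : maxdeg e - delta1 e <= _)%N.
        exact: leq_sub h2 h1.
      apply: leq_trans Hd _; rewrite -mulnn.
      by apply: leq_mul; apply: leq_sub2r; rewrite leq_mul2l h1 orbT.
    + move: le_xy; rewrite dy1 => H; have := dpos x; move: H.
      by case: (deg e x) => [|[|]].
  - rewrite dx1; apply: cond_pend; rewrite dpos /=; exact: pend exy dx1.
have all : forall x y, e x y -> cond (deg e x) (deg e y).
  move=> x y exy; case: (leqP (deg e x) (deg e y)) => h; first exact: main.
  rewrite condC; apply: main; [by rewrite esym | exact: ltnW].
rewrite /ABC /GA /edge_sum ltr_pM2r ?invr_gt0 ?ltr0n //.
case: (pickP (@predT V)) => [x0 _|H]; last first.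
  by move: n3; rewrite (eq_card0 H).
apply: ltr_sum; first by apply/hasP; exists x0; rewrite ?mem_index_enum.
move=> x _; case: (nb x) => y exy.
apply: ltr_sum; first by apply/hasP; exists y; rewrite ?mem_index_enum.
move=> z exz /=; apply: edge_ineq; [exact: dpos | exact: dpos | exact: all].
Qed.
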